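(* Let $\lambda_1,\lambda_2$ be as in the context, $K\in(-1,1)$, and let $b:\mathbb{R}\to\mathbb{R}$ be the solution of $b'(v)=\sqrt{\lambda_1^2-K(\lambda_1^2\cos^2 b(v)+\lambda_2^2\sin^2 b(v))}$, $b(0)=0$. Define $g:\mathbb{C}\to\mathbb{C}$ by $g(u+iv)=e^{-\lambda_1u}e^{ib(v)}$. Then $g$ satisfies $$g_{z\bar z}=\frac{2\left[\lambda_1^2(g+\bar g)-\lambda_2^2(g-\bar g)\right]}{\lambda_1^2(g+\bar g)^2-\lambda_2^2(g-\bar g)^2}\,g_zg_{\bar z},$$ and its Hopf differential is $Q=\frac{K}{16}\,dz^2$.
   Context: Either $\lambda_1>\lambda_2>0$ or $\lambda_1=\lambda_2=1$. Here $z=u+iv$, $g_z=\frac12(g_u-ig_v)$, $g_{\bar z}=\frac12(g_u+ig_v)$. The Hopf differential associated to $g$ is the quadratic differential $Q=\dfrac{g_z\bar g_z}{\lambda_1^2(g+\bar g)^2-\lambda_2^2(g-\bar g)^2}\,dz^2$, where $\bar g_z=\partial_z(\bar g)$. *)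

(* Defs.v *)
From Stdlib Require Import Reals.
From Coquelicot Require Import Coquelicot.
Open Scope R_scope.

(* A C-valued function of the two real variables (u,v), z = u + i v. *)
Definition CRR := R -> R -> C.

Definition pd_u (f : CRR) : CRR := fun u v =>
  (Derive (fun t => Re (f t v)) u, Derive (fun t => Im (f t v)) u).
Definition pd_v (f : CRR) : CRR := fun u v =>
  (Derive (fun t => Re (f u t)) v, Derive (fun t => Im (f u t)) v).

Definition dz (f : CRR) : CRR := fun u v =>
  Cmult (RtoC (1/2)) (Cminus (pd_u f u v) (Cmult Ci (pd_v f u v))).
Definition dzb (f : CRR) : CRR := fun u v =>
  Cmult (RtoC (1/2)) (Cplus (pd_u f u v) (Cmult Ci (pd_v f u v))).

Definition conjf (f : CRR) : CRR := fun u v => Cconj (f u v).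

Definition lambdas_ok (l1 l2 : R) : Prop :=
  (l1 > l2 /\ l2 > 0) \/ (l1 = 1 /\ l2 = 1).

Definition gfun (l1 : R) (b : R -> R) : CRR := fun u v =>
  Cmult (RtoC (exp (- l1 * u))) (cos (b v), sin (b v)).

Definition hopf_den (l1 l2 : R) (w : C) : C :=
  Cminus (Cmult (RtoC (l1^2)) (Cmult (Cplus w (Cconj w)) (Cplus w (Cconj w))))
         (Cmult (RtoC (l2^2)) (Cmult (Cminus w (Cconj w)) (Cminus w (Cconj w)))).

(* coefficient of the Hopf differential Q = hopf_coeff dz^2 *)
Definition hopf_coeff (l1 l2 : R) (g : CRR) (u v : R) : C :=
  Cdiv (Cmult (dz g u v) (dz (conjf g) u v)) (hopf_den l1 l2 (g u v)).

(* Main.v *)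
Require Import Defs.
From Stdlib Require Import Reals Lra Nsatz FunctionalExtensionality.
From Coquelicot Require Import Coquelicot.
Open Scope R_scope.

Lemma pair_eq (a b c d : R) : a = c -> b = d -> (a, b) = (c, d).
Proof. intros -> ->; reflexivity. Qed.

Lemma Cdiv_R (x y d : R) : d <> 0 -> Cdiv (x, y) (RtoC d) = (x / d, y / d).
Proof.
  intros Hd. unfold Cdiv, Cinv, Cmult, RtoC; simpl. apply pair_eq; field; auto.
Qed.

Ltac fin Hb2 Hsc q s c :=
  try replace (q^2) with (q*q) by ring; try rewrite Hb2;
  first
  [ let Hs := fresh in assert (Hs: s^2 = 1 - c^2) by (rewrite <- Hsc; ring);
    try replace (s^4) with ((s^2)^2) by ring; try replace (s^6) with ((s^2)^3) by ring;
    try replace (s^8) with ((s^2)^4) by ring; try rewrite Hs; ring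
  | let Hs := fresh in assert (Hs: c^2 = 1 - s^2) by (rewrite <- Hsc; ring);
    try replace (c^4) with ((c^2)^2) by ring; try replace (c^6) with ((c^2)^3) by ring;
    try replace (c^8) with ((c^2)^4) by ring; try rewrite Hs; ring ].

Theorem proposition4p2 (l1 l2 K : R) (b : R -> R) :
  lambdas_ok l1 l2 ->
  -1 < K < 1 ->
  (forall v, is_derive b v
     (sqrt (l1^2 - K * (l1^2 * (cos (b v))^2 + l2^2 * (sin (b v))^2)))) ->
  b 0 = 0 ->
  forall u v : R,
    let g := gfun l1 b in
    let w := g u v in
    dz (dzb g) u v =
      Cmult
        (Cdiv (Cmult (RtoC 2)
                 (Cminus (Cmult (RtoC (l1^2)) (Cplus w (Cconj w)))
                         (Cmult (RtoC (l2^2)) (Cminus w (Cconj w)))))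
              (hopf_den l1 l2 w))
        (Cmult (dz g u v) (dzb g u v))
    /\ hopf_coeff l1 l2 g u v = RtoC (K / 16).
Proof.
  intros Hl HK Hb _ u0 v0 g w.
  assert (Hl12 : 0 < l2 /\ l2 <= l1) by (destruct Hl as [[? ?]|[-> ->]]; lra).
  destruct Hl12 as [Hl2 Hl21].
  set (P := fun x => l1^2 - K * (l1^2 * (cos x)^2 + l2^2 * (sin x)^2)).
  set (D := fun x => l1^2 * (cos x)^2 + l2^2 * (sin x)^2).
  assert (HD : forall x, 0 < D x).
  { intro x. unfold D. pose proof (sin2_cos2 x). unfold Rsqr in *.
    assert (l2^2 <= l1^2) by nra.
    assert (0 <= cos x ^2) by nra. assert (0 <= sin x ^2) by nra.
    assert (0 < l2^2) by nra. nra. }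
  assert (HDle : forall x, D x <= l1^2).
  { intro x. unfold D. pose proof (sin2_cos2 x). unfold Rsqr in *.
    assert (l2^2 <= l1^2) by nra.
    assert (0 <= cos x ^2) by nra. assert (0 <= sin x ^2) by nra. nra. }
  assert (HP : forall x, 0 < P x).
  { intro x. unfold P. fold (D x). pose proof (HD x). pose proof (HDle x).
    destruct (Rle_dec 0 K); nra. }
  set (be := fun v => sqrt (P (b v))).
  assert (Hbe2 : forall v, be v * be v = P (b v)).
  { intro v. unfold be. apply sqrt_sqrt. apply Rlt_le, HP. }
  assert (Hbe0 : forall v, 0 < be v).
  { intro v. unfold be. apply sqrt_lt_R0, HP. }
  assert (Hexb : forall v, ex_derive b v).
  { intro v. eexists. apply Hb. }
  assert (HDb : forall v, Derive (fun x => b x) v = be v).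
  { intro v. apply is_derive_unique. apply Hb. }
  set (E := fun t => exp (- l1 * t)).
  assert (Hg : forall u v, g u v = (E u * cos (b v), E u * sin (b v))).
  { intros u v. unfold g, gfun, Cmult, RtoC, E; simpl. apply pair_eq; ring. }
  assert (Hgf : g = fun u v => (E u * cos (b v), E u * sin (b v))).
  { apply functional_extensionality; intro u; apply functional_extensionality; intro v; apply Hg. }
  assert (Hcf : conjf g = fun u v => (E u * cos (b v), - (E u * sin (b v)))).
  { apply functional_extensionality; intro u; apply functional_extensionality; intro v.
    unfold conjf. rewrite Hg. unfold Cconj; simpl. reflexivity. }
  assert (Hgu : forall u v, pd_u g u v = (-l1 * E u * cos (b v), -l1 * E u * sin (b v))).
  { intros u v. rewrite Hgf. unfold pd_u; simpl. unfold E.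
    apply pair_eq; apply is_derive_unique; auto_derive; auto; ring. }
  assert (Hgv : forall u v, pd_v g u v = (- E u * sin (b v) * be v, E u * cos (b v) * be v)).
  { intros u v. rewrite Hgf. unfold pd_v; simpl.
    apply pair_eq; apply is_derive_unique; auto_derive; auto; rewrite HDb; ring. }
  assert (Hcu : forall u v, pd_u (conjf g) u v = (-l1 * E u * cos (b v), l1 * E u * sin (b v))).
  { intros u v. rewrite Hcf. unfold pd_u; simpl. unfold E.
    apply pair_eq; apply is_derive_unique; auto_derive; auto; ring. }
  assert (Hcv : forall u v, pd_v (conjf g) u v = (- E u * sin (b v) * be v, - E u * cos (b v) * be v)).
  { intros u v. rewrite Hcf. unfold pd_v; simpl.
    apply pair_eq; apply is_derive_unique; auto_derive; auto; rewrite HDb; ring. }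
  assert (Hdzb : dzb g = fun u v => (-(l1 + be v)/2 * E u * cos (b v), -(l1 + be v)/2 * E u * sin (b v))).
  { apply functional_extensionality; intro u; apply functional_extensionality; intro v.
    unfold dzb. rewrite Hgu, Hgv. unfold Cmult, Cplus, Ci, RtoC; simpl. apply pair_eq; field. }
  set (bp := fun v => K * cos (b v) * sin (b v) * (l1^2 - l2^2)).
  assert (Hbp : forall v, is_derive be v (bp v)).
  { intro v. unfold be, bp, P. auto_derive.
    - repeat split; auto. apply HP.
    - rewrite HDb. fold (P (b v)). fold (be v).
      assert (Ex: forall x, l1*(l1*1) + - (K*(l1*(l1*1)*(cos x*(cos x*1)) + l2*(l2*1)*(sin x*(sin x*1)))) = P x) by (intro; unfold P; ring).
      rewrite Ex. pose proof (Hbe0 v). unfold be in *. field. lra. }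
  assert (Hhu : forall u v, pd_u (dzb g) u v = (l1 * (l1 + be v)/2 * E u * cos (b v), l1 * (l1 + be v)/2 * E u * sin (b v))).
  { intros u v. rewrite Hdzb. unfold pd_u; simpl. unfold E.
    apply pair_eq; apply is_derive_unique; auto_derive; auto; field. }
  assert (Hbpdef : forall v, bp v = K * cos (b v) * sin (b v) * (l1^2 - l2^2)) by reflexivity.
  clearbody be bp.
  assert (Hexbe : forall v, ex_derive be v) by (intro v; eexists; apply Hbp).
  assert (HDbe : forall v, Derive (fun x => be x) v = bp v) by (intro v; apply is_derive_unique; apply Hbp).
  assert (Hhv : forall u v, pd_v (dzb g) u v =
     (- bp v / 2 * E u * cos (b v) + (l1 + be v)/2 * E u * sin (b v) * be v,
      - bp v / 2 * E u * sin (b v) - (l1 + be v)/2 * E u * cos (b v) * be v)).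
  { intros u v. rewrite Hdzb. unfold pd_v; simpl.
    apply pair_eq; apply is_derive_unique; auto_derive; auto; rewrite ?HDb, ?HDbe; field. }
  assert (Hden : hopf_den l1 l2 (g u0 v0) = RtoC (4 * E u0 ^ 2 * D (b v0))).
  { rewrite Hg. unfold hopf_den, D, Cmult, Cplus, Cminus, Copp, Cconj, RtoC; simpl.
    apply pair_eq; cbv [fst snd]; ring. }
  assert (HE : 0 < E u0) by (unfold E; apply exp_pos).
  pose proof (HD (b v0)) as HDv.
  pose proof (Hbe2 v0) as Hb2. pose proof (sin2_cos2 (b v0)) as Hsc. unfold Rsqr in Hsc.
  unfold P in Hb2.
  split.
  - unfold w. rewrite Hden. unfold dz. rewrite Hhu, Hhv. unfold dzb. rewrite Hgu, Hgv, Hg.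
    rewrite Hbpdef. unfold D in *.
    set (e := E u0) in *. set (c := cos (b v0)) in *. set (s := sin (b v0)) in *.
    set (q := be v0) in *. clearbody e c s q. clear -Hb2 Hsc HDv HE Hl2 Hl21.
    unfold Cdiv, Cinv, Cmult, Cplus, Cminus, Copp, Cconj, RtoC, Ci; simpl.
    apply pair_eq; cbv [fst snd]; field_simplify_eq;
      [fin Hb2 Hsc q s c | split; [nra | lra] | fin Hb2 Hsc q s c | split; [nra | lra]].
  - unfold hopf_coeff. rewrite Hden. unfold dz. rewrite Hgu, Hgv, Hcu, Hcv.
    unfold D in *.
    set (e := E u0) in *. set (c := cos (b v0)) in *. set (s := sin (b v0)) in *.
    set (q := be v0) in *. clearbody e c s q. clear -Hb2 Hsc HDv HE Hl2 Hl21.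
    unfold Cdiv, Cinv, Cmult, Cplus, Cminus, Copp, Cconj, RtoC, Ci; simpl.
    apply pair_eq; cbv [fst snd]; field_simplify_eq;
      [fin Hb2 Hsc q s c | split; [nra | lra] | fin Hb2 Hsc q s c | split; [nra | lra]].
Qed.
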